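(* A nontrivial monoid $M$ in $\mathcal{C}$ is an HFM if and only if $\mathcal{A}(M)$ is contained in an affine hyperplane $H$ of $V=\mathbb{R}\otimes_\mathbb{Z}\mathrm{gp}(M)$ not containing the origin; moreover, in that case $\mathcal{A}(M)=M\cap H$.
   Context: Convention: all monoids are commutative, cancellative, and reduced, written additively; $M^\bullet=M\setminus\{0\}$; atoms $\mathcal{A}(M)=M^\bullet\setminus(M^\bullet+M^\bullet)$. $\mathcal{C}$ is the class of monoids isomorphic to a submonoid of a free commutative monoid of finite rank (equivalently, of $(\mathbb{N}^d,+)$). $M$ is regarded as a submonoid of $V$ via $M\hookrightarrow\mathrm{gp}(M)\hookrightarrow V$. A factorization of $x$ is a multiset of atoms summing to $x$, its length the number of atoms with multiplicity; $M$ is an HFM (half-factorial) if every element is a sum of atoms and any two factorizations of the same nonzero element have the same length. *)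

(* Defs.v *)
From HB Require Import structures.
From mathcomp Require Import all_boot all_order all_algebra.
Set Implicit Arguments. Unset Strict Implicit. Unset Printing Implicit Defensive.
Import Order.TTheory GRing.Theory Num.Theory.

Definition nvec (d : nat) := {ffun 'I_d -> nat}.
Definition vzero (d : nat) : nvec d := [ffun => 0%N].
Definition vadd (d : nat) (x y : nvec d) : nvec d := [ffun i => (x i + y i)%N].
Definition vsum (d : nat) (s : seq (nvec d)) : nvec d := foldr (@vadd d) (vzero d) s.

(* A monoid in the class C, given as a submonoid of (N^d,+). *)
Definition is_submonoid (d : nat) (M : nvec d -> Prop) : Prop :=
  M (vzero d) /\ (forall x y, M x -> M y -> M (vadd x y)).

Definition nontrivial (d : nat) (M : nvec d -> Prop) : Prop :=
  exists x, M x /\ x <> vzero d.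

Definition is_atom (d : nat) (M : nvec d -> Prop) (a : nvec d) : Prop :=
  M a /\ a <> vzero d /\
  ~ (exists b c, M b /\ M c /\ b <> vzero d /\ c <> vzero d /\ a = vadd b c).

Definition is_factorization (d : nat) (M : nvec d -> Prop) (x : nvec d)
  (s : seq (nvec d)) : Prop :=
  (forall a, a \in s -> is_atom M a) /\ vsum s = x.

Definition HFM (d : nat) (M : nvec d -> Prop) : Prop :=
  (forall x, M x -> exists s, is_factorization M x s) /\
  (forall x s t, M x -> x <> vzero d ->
     is_factorization M x s -> is_factorization M x t -> size s = size t).

(* The embedding M -> gp(M) -> V, with V realised inside R^d. *)
Definition embed (R : realFieldType) (d : nat) (x : nvec d) : 'rV[R]_d :=
  \row_i ((x i)%:R)%R.

(* V = R (x)_Z gp(M), realised as the R-linear span of M in R^d. *)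
Definition in_V (R : realFieldType) (d : nat) (M : nvec d -> Prop)
  (v : 'rV[R]_d) : Prop :=
  exists (s : seq (nvec d)) (c : seq R),
    (forall x, x \in s -> M x) /\ size c = size s /\
    (v = \sum_(i < size s) (nth 0%R c i) *: embed R (nth (vzero d) s i))%R.

Definition dotv (R : realFieldType) (d : nat) (w v : 'rV[R]_d) : R :=
  \sum_(i < d) (w 0 i * v 0 i)%R.

Definition affine_hyperplane_of_V (R : realFieldType) (d : nat)
  (M : nvec d -> Prop) (H : 'rV[R]_d -> Prop) : Prop :=
  exists (w : 'rV[R]_d) (c : R),
    (exists v, in_V M v /\ dotv w v != 0%R) /\
    (forall v, H v <-> (in_V M v /\ dotv w v = c)).

(* Main.v *)
Require Import Defs.
From HB Require Import structures.
From mathcomp Require Import all_boot all_order all_algebra.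
From Stdlib Require Import Classical ClassicalEpsilon.
From mathcomp Require Import zify.
Import Order.TTheory GRing.Theory Num.Theory.
Set Implicit Arguments. Unset Strict Implicit.

Section Basics.
Variable d : nat.
Implicit Types x y z : nvec d.

Lemma vaddC x y : vadd x y = vadd y x.
Proof. by apply/ffunP=> i; rewrite !ffunE addnC. Qed.
Lemma vaddA x y z : vadd x (vadd y z) = vadd (vadd x y) z.
Proof. by apply/ffunP=> i; rewrite !ffunE addnA. Qed.
Lemma vadd0 x : vadd (vzero d) x = x.
Proof. by apply/ffunP=> i; rewrite !ffunE. Qed.
Lemma vaddv0 x : vadd x (vzero d) = x.
Proof. by apply/ffunP=> i; rewrite !ffunE addn0. Qed.

Lemma vsum_cat (s t : seq (nvec d)) : vsum (s ++ t) = vadd (vsum s) (vsum t).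
Proof. elim: s => [|a s IH] /=; first by rewrite vadd0. by rewrite IH vaddA. Qed.

Definition wt x := (\sum_(i < d) x i)%N.
Lemma wt_add x y : wt (vadd x y) = (wt x + wt y)%N.
Proof. rewrite /wt -big_split /=; apply: eq_bigr => i _; by rewrite ffunE. Qed.
Lemma wt_pos x : x <> vzero d -> (0 < wt x)%N.
Proof.
move=> nz; rewrite lt0n; apply/negP => /eqP w0; apply: nz; apply/ffunP => i.
rewrite ffunE; apply/eqP; rewrite -leqn0 -w0 /wt.
by rewrite (bigD1 i) //= leq_addr.
Qed.

Variable M : nvec d -> Prop.
Hypothesis subM : is_submonoid M.

Lemma atomic x : M x -> exists s, is_factorization M x s.
Proof.
move: {2}(wt x) (leqnn (wt x)) => n; elim: n x => [|n IH] x.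
  rewrite leqn0 => /eqP w0 Mx; exists [::]; split => //.
  case: (classic (x = vzero d)) => [->//|nz]; by move: (wt_pos nz); rewrite w0.
move=> le Mx.
case: (classic (x = vzero d)) => [->|nz]; first by exists [::].
case: (classic (is_atom M x)) => [xat|xnat].
  exists [:: x]; split; first by move=> a; rewrite inE => /eqP ->.
  by rewrite /= vaddv0.
have [b [c [Mb [Mc [bnz [cnz Ex]]]]]] :
   exists b c, M b /\ M c /\ b <> vzero d /\ c <> vzero d /\ x = vadd b c.
  apply: NNPP => H; apply: xnat; by split.
subst x; move: le; rewrite wt_add => le.
have [sb [Hsb Esb]] : exists s, is_factorization M b s.
  apply: IH => //; move: (wt_pos cnz) => cp; lia.
have [sc [Hsc Esc]] : exists s, is_factorization M c s.
  apply: IH => //; move: (wt_pos bnz) => cp; lia.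
exists (sb ++ sc); split; last by rewrite vsum_cat Esb Esc.
by move=> a; rewrite mem_cat => /orP [/Hsb|/Hsc].
Qed.

Lemma vfact0 (s : seq (nvec d)) : is_factorization M (vzero d) s -> s = [::].
Proof.
case: s => [//|a s] [Hs E].
have [_ [anz _]] := Hs a (mem_head _ _).
have w0 : wt (vzero d) = 0%N by rewrite /wt big1 // => i _; rewrite ffunE.
move: (wt_pos anz); rewrite -E in w0; move: w0; rewrite /= wt_add.
by move=> /eqP; rewrite addn_eq0 => /andP[/eqP -> _].
Qed.

End Basics.

Section Lin.
Variable R : realFieldType.
Variable d : nat.

Lemma embed_add (x y : nvec d) : embed R (vadd x y) = (embed R x + embed R y)%R.
Proof. by apply/rowP => i; rewrite !mxE ffunE natrD. Qed.
Lemma embed_zero : embed R (vzero d) = 0%R.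
Proof. by apply/rowP => i; rewrite !mxE ffunE. Qed.

Lemma dotvD (w u v : 'rV[R]_d) : dotv w (u + v)%R = (dotv w u + dotv w v)%R.
Proof. rewrite /dotv -big_split; apply: eq_bigr => i _; by rewrite mxE mulrDr. Qed.
Lemma dotvZ (w : 'rV[R]_d) k (v : 'rV[R]_d) : dotv w (k *: v)%R = (k * dotv w v)%R.
Proof. rewrite /dotv mulr_sumr; apply: eq_bigr => i _; by rewrite mxE mulrCA. Qed.
Lemma dotv0 (w : 'rV[R]_d) : dotv w 0%R = 0%R.
Proof. rewrite /dotv big1 // => i _; by rewrite mxE mulr0. Qed.
Lemma dotv_sum (w : 'rV[R]_d) (I : Type) (r : seq I) (F : I -> 'rV[R]_d) :
  dotv w (\sum_(i <- r) F i)%R = (\sum_(i <- r) dotv w (F i))%R.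
Proof. apply: (big_morph _ (dotvD w) (dotv0 w)). Qed.

Lemma dot_fact (M : nvec d -> Prop) (w : 'rV[R]_d) (c : R) x (s : seq (nvec d)) :
  (forall a, is_atom M a -> dotv w (embed R a) = c) ->
  is_factorization M x s -> dotv w (embed R x) = ((size s)%:R * c)%R.
Proof.
move=> Ha [Hs <-]; elim: s Hs => [|a s IH] Hs /=; first by rewrite embed_zero dotv0 mul0r.
rewrite embed_add dotvD IH; last by move=> b bs; apply: Hs; rewrite inE bs orbT.
rewrite Ha; last by apply: Hs; rewrite mem_head.
by rewrite -[(size s).+1]addn1 natrD mulrDl mul1r addrC.
Qed.

Lemma in_V0 (M : nvec d -> Prop) : in_V M (0 : 'rV[R]_d)%R.
Proof. exists [::], [::]; split => //; split => //; by rewrite big_ord0. Qed.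

End Lin.

Local Open Scope ring_scope.

Section HFMdir.
Variable d : nat.
Variable M : nvec d -> Prop.
Hypothesis subM : is_submonoid M.
Hypothesis hfm : HFM M.

Lemma Madd x y : M x -> M y -> M (vadd x y).
Proof. by case: subM => _ H; apply: H. Qed.

Definition Lfact x n := exists s, is_factorization M x s /\ size s = n.

Lemma Lfact_uniq x n m : M x -> Lfact x n -> Lfact x m -> n = m.
Proof.
move=> Mx [s [Hs <-]] [t [Ht <-]].
case: (classic (x = vzero d)) => [E|nz]; last by apply: (hfm.2 x).
by subst x; rewrite (vfact0 Hs) (vfact0 Ht).
Qed.

Lemma Lfact_add x y n m : Lfact x n -> Lfact y m -> Lfact (vadd x y) (n + m).
Proof.
move=> [s [[Hs Es] <-]] [t [[Ht Et] <-]]; exists (s ++ t); split; last by rewrite size_cat.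
split; last by rewrite vsum_cat Es Et.
by move=> a; rewrite mem_cat => /orP [/Hs|/Ht].
Qed.

Definition ell x := epsilon (inhabits 0%N) (Lfact x).

Lemma ell_spec x : M x -> Lfact x (ell x).
Proof.
move=> Mx; apply: epsilon_spec; have [s Hs] := hfm.1 x Mx; by exists (size s), s.
Qed.

Lemma ell_add x y : M x -> M y -> ell (vadd x y) = (ell x + ell y)%N.
Proof.
move=> Mx My; apply: (Lfact_uniq (Madd Mx My)); first exact: ell_spec (Madd Mx My).
exact: Lfact_add (ell_spec Mx) (ell_spec My).
Qed.

Lemma ell_atom a : is_atom M a -> ell a = 1%N.
Proof.
move=> Ha; have Ma := Ha.1; apply: (Lfact_uniq Ma (ell_spec Ma)).
exists [:: a]; split => //; split; first by move=> b; rewrite inE => /eqP ->.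
by rewrite /= vaddv0.
Qed.

Lemma ell0 : ell (vzero d) = 0%N.
Proof.
have M0 : M (vzero d) by case: subM.
apply: (Lfact_uniq M0 (ell_spec M0)); by exists [::].
Qed.

Definition scal k x := iter k (vadd x) (vzero d).

Lemma scal_prop k x : M x -> M (scal k x) /\ ell (scal k x) = (k * ell x)%N.
Proof.
move=> Mx; elim: k => [|k [IH1 IH2]] /=; first by split; [case: subM|rewrite ell0].
split; first exact: Madd.
by rewrite ell_add // IH2 mulSn.
Qed.

Notation embQ := (@embed rat d).

Lemma embQ_scal k x : embQ (scal k x) = (k%:R *: embQ x)%R.
Proof.
elim: k => [|k IH] /=; first by rewrite embed_zero scale0r.
by rewrite embed_add IH -[k.+1]add1n natrD scalerDl scale1r.
Qed.

Lemma embQ_inj x y : embQ x = embQ y -> x = y.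
Proof.
move=> E; apply/ffunP => i; move/rowP: E => /(_ i); rewrite !mxE => /eqP.
by rewrite eqr_nat => /eqP.
Qed.

Section Fam.
Variable I : finType.
Variable t : I -> nvec d.
Hypothesis Mt : forall i, M (t i).

Definition comb (k : I -> nat) := \big[@vadd d/vzero d]_(i : I) scal (k i) (t i).

Lemma comb_prop k : M (comb k) /\ ell (comb k) = (\sum_(i : I) k i * ell (t i))%N.
Proof.
rewrite /comb; apply: (big_ind2 (fun x n => M x /\ ell x = n)).
- by split; [case: subM | rewrite ell0].
- move=> x1 n1 x2 n2 [H1 E1] [H2 E2]; split; first exact: Madd.
  by rewrite ell_add // E1 E2.
- by move=> i _; apply: scal_prop.
Qed.

Lemma embQ_comb k : embQ (comb k) = (\sum_(i : I) (k i)%:R *: embQ (t i))%R.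
Proof.
rewrite /comb (big_morph _ (@embed_add _ d) (@embed_zero _ d)).
by apply: eq_bigr => i _; rewrite embQ_scal.
Qed.

Lemma relB (p m : I -> nat) :
  (\sum_(i : I) (p i)%:R *: embQ (t i))%R = (\sum_(i : I) (m i)%:R *: embQ (t i))%R ->
  (\sum_(i : I) p i * ell (t i))%N = (\sum_(i : I) m i * ell (t i))%N.
Proof.
rewrite -!embQ_comb => /embQ_inj E.
by rewrite -(comb_prop p).2 -(comb_prop m).2 E.
Qed.

Lemma clear_den (q : I -> rat) :
  exists N : nat, (0 < N)%N /\ exists k : I -> int, forall i, (N%:R * q i = (k i)%:~R)%R.
Proof.
exists (\prod_(i : I) `|denq (q i)|)%N; split.
  rewrite prodn_gt0 // => i; rewrite absz_gt0; exact: denq_neq0.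
exists (fun i => numq (q i) * (\prod_(j : I | j != i) `|denq (q j)|)%N%:Z)%R => i.
rewrite (bigD1 i) //= natrM intrM.
have -> : (`|denq (q i)|%N%:R = (denq (q i))%:~R :> rat)%R.
  by rewrite -[X in _ = X%:~R]gez0_abs ?denq_ge0 //.
by rewrite numqE mulrC mulrA [X in (X * _)%R]mulrC.
Qed.

Lemma relC (q : I -> rat) :
  (\sum_(i : I) q i *: embQ (t i))%R = 0%R ->
  (\sum_(i : I) q i * (ell (t i))%:R)%R = 0%R.
Proof.
move=> E.
have [N [N0 [k Hk]]] := clear_den q.
pose p i := match k i with Posz n => n | Negz _ => 0%N end.
pose m i := match k i with Posz _ => 0%N | Negz n => n.+1 end.
have Hkpm i : ((k i)%:~R = (p i)%:R - (m i)%:R :> rat)%R.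
  rewrite /p /m; case: (k i) => n; first by rewrite subr0.
  by rewrite NegzE mulrNz sub0r.
have E2 : (\sum_(i : I) (p i)%:R *: embQ (t i))%R = (\sum_(i : I) (m i)%:R *: embQ (t i))%R.
  apply/eqP; rewrite -subr_eq0 -sumrB.
  have -> : (\sum_i ((p i)%:R *: embQ (t i) - (m i)%:R *: embQ (t i)) =
             N%:R *: \sum_i q i *: embQ (t i))%R.
    rewrite scaler_sumr; apply: eq_bigr => i _.
    by rewrite -scalerBl scalerA Hk Hkpm.
  by rewrite E scaler0.
have E3 := relB E2.
have NZ : (N%:R : rat) != 0 by rewrite pnatr_eq0 -lt0n.
apply: (mulfI NZ); rewrite mulr0 mulr_sumr.
have -> : (\sum_i N%:R * (q i * (ell (t i))%:R) =
    (\sum_i p i * ell (t i))%N%:R - (\sum_i m i * ell (t i))%N%:R :> rat)%R.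
  rewrite !natr_sum -sumrB; apply: eq_bigr => i _.
  by rewrite mulrA Hk Hkpm !natrM mulrBl.
by rewrite E3 subrr.
Qed.

End Fam.
End HFMdir.

Section Span.
Variable d : nat.
Variable M : nvec d -> Prop.

Definition Vm (s : seq (nvec d)) : 'M[rat]_(size s, d) :=
  \matrix_(i, j) (embed rat (nth (vzero d) s i)) 0 j.

Lemma rowVm s i : row i (Vm s) = embed rat (nth (vzero d) s i).
Proof. by apply/rowP => j; rewrite !mxE. Qed.

Definition allM (s : seq (nvec d)) := forall x, x \in s -> M x.
Definition spanning (s : seq (nvec d)) := forall y, M y -> (embed rat y <= Vm s)%MS.

Lemma span_exists : exists s, allM s /\ spanning s.
Proof.
suff H : forall k, (exists s, allM s /\ spanning s) \/
                   (exists s, allM s /\ (k <= \rank (Vm s))%N).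
  case: (H d.+1) => [//|[s [_ Hr]]]; by move: (leq_trans Hr (rank_leq_col (Vm s))); rewrite ltnn.
elim => [|k IH]; first by right; exists [::].
case: IH => [IH|[s [Ms Hr]]]; first by left.
case: (classic (spanning s)) => [sp|nsp]; first by left; exists s.
have [y Hy] := not_all_ex_not _ _ nsp.
have [My ny] := imply_to_and _ _ Hy.
right; exists (y :: s); split.
  by move=> x; rewrite inE => /orP [/eqP ->|/Ms].
apply: leq_ltn_trans Hr _; apply: rank_ltmx; rewrite ltmxE; apply/andP; split.
  apply/row_subP => i; rewrite rowVm.
  have -> : nth (vzero d) s i = nth (vzero d) (y :: s) (lift ord0 i) by rewrite lift0.
  by rewrite -rowVm row_sub.
apply/negP => H; apply: ny; apply: submx_trans H.
have -> : embed rat y = row ord0 (Vm (y :: s)) by rewrite (@rowVm (y :: s) ord0).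
exact: row_sub.
Qed.
End Span.

Section Solve.
Variable d : nat.
Variable M : nvec d -> Prop.
Hypothesis subM : is_submonoid M.
Hypothesis hfm : HFM M.

Lemma exists_w : exists w : 'rV[rat]_d,
  forall y, M y -> dotv w (embed rat y) = (ell M y)%:R.
Proof.
have [s [Ms sp]] := span_exists M.
pose t (i : 'I_(size s)) := nth (vzero d) s i.
have Mt : forall i, M (t i) := fun i => Ms _ (mem_nth _ (ltn_ord i)).
pose V := Vm s.
pose f : 'rV[rat]_(size s) := \row_i (ell M (t i))%:R.
have fsub : (f <= V^T)%MS.
  rewrite submxE; apply/eqP/rowP => j; rewrite !mxE.
  set C := cokermx V^T.
  have E : \sum_i C i j *: embed rat (t i) = 0.
    apply/rowP => k; rewrite summxE mxE.
    transitivity ((V^T *m C) k j); last by rewrite mulmx_coker mxE.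
    by rewrite mxE; apply: eq_bigr => i _; rewrite !mxE mulrC.
  rewrite -[RHS](relC subM hfm Mt E); apply: eq_bigr => i _; by rewrite mxE mulrC.
have [D HD] := submxP fsub.
have Hdot : forall i, dotv D (embed rat (t i)) = (ell M (t i))%:R.
  move=> i; move/(congr1 (fun A : 'rV[rat]_(size s) => A 0 i)): HD; rewrite !mxE => ->.
  by apply: eq_bigr => k _; rewrite !mxE.
exists D => y My.
have /submxP [u Hu] := sp y My.
rewrite mulmx_sum_row in Hu.
pose t' (i : 'I_(size s).+1) := nth (vzero d) (y :: s) i.
pose q (i : 'I_(size s).+1) := if unlift ord0 i is Some j then - u 0 j else 1.
have Mt' : forall i, M (t' i).
  move=> i; rewrite /t'; have := @mem_nth _ (vzero d) (y :: s) i (ltn_ord i).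
  by rewrite inE => /orP [/eqP ->|/Ms].
have E : \sum_i q i *: embed rat (t' i) = 0.
  rewrite big_ord_recl /q unlift_none scale1r.
  under eq_bigr => i _ do rewrite liftK /t' lift0 /=.
  apply/eqP; rewrite addr_eq0 -sumrN Hu; apply/eqP; apply: eq_bigr => i _.
  by rewrite rowVm scaleNr opprK.
have := relC subM hfm Mt' E.
rewrite big_ord_recl /q unlift_none mul1r /t' /=.
under eq_bigr => i _ do rewrite liftK add0n.
move/eqP; rewrite addr_eq0 => /eqP ->.
rewrite Hu dotv_sum -sumrN; apply: eq_bigr => i _.
by rewrite dotvZ rowVm Hdot mulNr opprK.
Qed.
End Solve.

Lemma in_V_embed (R : realFieldType) d (M : nvec d -> Prop) x :
  M x -> in_V M (embed R x).
Proof.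
move=> Mx; exists [:: x], [:: 1]; split; first by move=> z; rewrite inE => /eqP ->.
split => //; by rewrite big_ord1 /= scale1r.
Qed.

Unset Implicit Arguments.

Theorem mainTheorem9 (R : realFieldType) (d : nat) (M : nvec d -> Prop) :
  is_submonoid M -> nontrivial M ->
  (HFM M <->
     exists H : 'rV[R]_d -> Prop,
       affine_hyperplane_of_V M H /\ ~ H 0%R /\
       (forall a, is_atom M a -> H (embed R a))) /\
  (forall H : 'rV[R]_d -> Prop,
     affine_hyperplane_of_V M H -> ~ H 0%R ->
     (forall a, is_atom M a -> H (embed R a)) ->
     forall x, is_atom M x <-> (M x /\ H (embed R x))).
Proof.
move=> subM ntM.
have hypc : forall (H : 'rV[R]_d -> Prop) w c,
    (forall v, H v <-> in_V M v /\ dotv w v = c) -> ~ H 0 ->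
    (forall a, is_atom M a -> H (embed R a)) ->
    c != 0 /\ forall a, is_atom M a -> dotv w (embed R a) = c.
  move=> H w c HH nH0 Hat; split.
    apply/eqP => c0; apply: nH0; apply/HH; split; [exact: in_V0|by rewrite dotv0 c0].
  by move=> a /Hat/HH [].
split; last first.
  move=> H [w [c [_ HH]]] nH0 Hat x; have [c0 Hac] := hypc H w c HH nH0 Hat.
  split; first by move=> xa; split; [exact: xa.1 | exact: Hat].
  move=> [Mx Hx].
  have [s Fs] := atomic Mx.
  have := dot_fact Hac Fs; rewrite ((HH _).1 Hx).2 -{1}[c]mul1r.
  move=> /(mulIf c0) /esym /eqP; rewrite pnatr_eq1 => /eqP s1.
  case: s Fs s1 => [//|a [|//]] [Hs E] _.
  rewrite /= vaddv0 in E; rewrite -E; apply: Hs; exact: mem_head.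
split.
  move=> hfm.
  have [D HD] := exists_w subM hfm.
  pose wR := map_mx (@ratr R) D.
  have Hw : forall y, M y -> dotv wR (embed R y) = (ell M y)%:R.
    move=> y My; rewrite -(ratr_nat R (ell M y)) -HD // /dotv rmorph_sum.
    by apply: eq_bigr => i _; rewrite !mxE rmorphM /= ratr_nat.
  have [x [Mx nz]] := ntM.
  have [[|a s] [Hs E]] := atomic Mx; first by rewrite -E in nz.
  have aat : is_atom M a := Hs a (mem_head _ _).
  exists (fun v => in_V M v /\ dotv wR v = 1); split; last split.
  - exists wR, 1; split => //; exists (embed R a); split; first exact: in_V_embed aat.1.
    by rewrite Hw; [rewrite (ell_atom hfm aat) oner_neq0 | exact: aat.1].
  - by move=> [_]; rewrite dotv0 => /eqP; rewrite eq_sym oner_eq0.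
  - move=> b bat; split; first exact: in_V_embed bat.1.
    by rewrite Hw; [rewrite (ell_atom hfm bat) | exact: bat.1].
move=> [H [[w [c [_ HH]]] [nH0 Hat]]].
have [c0 Hac] := hypc H w c HH nH0 Hat.
split; first by move=> x Mx; apply: atomic.
move=> x s t Mx _ Fs Ft.
have := dot_fact Hac Fs; rewrite (dot_fact Hac Ft) => /(mulIf c0) /eqP.
by rewrite eqr_nat eq_sym => /eqP.
Qed.
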